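(* (i) The Max-Egal objective is subject to 1-safe UB-improvement by a manipulator $m^-$ over directed networks. (ii) The At-least-1 objective is subject to 1-safe UB-improvement by a manipulator $m^+$ over undirected networks. Here ''subject to 1-safe UB-improvement'' means: there exist $k$, a network $G$ of the stated type, an agent $m$ and a manipulation $r_m$ of the stated kind such that for every possible network $\overline{G_1}$ of the distance-1 partial network $G_1$ of $m$, \[\max_{P\in O(\overline{G_1}^m)} u(m,P)\ge\max_{P\in O(\overline{G_1})} u(m,P),\] and for at least one possible network $\overline{G_1}$ the inequality is strict.
   Context: Agents $A=\{a_1,\dots,a_n\}$ (finite); the social network $G=\langle A,E\rangle$ is a directed or undirected graph without self-loops; $N(a)$ is the set of (out-)neighbours of $a$. For $C\ni a$, $u(a,C)=|C\cap N(a)|$. For $0<k\le n$, $\Pi_k$ is the set of partitions of $A$ into exactly $k$ nonempty coalitions, and $u(a,P)=u(a,C)$ for the $C\in P$ containing $a$. Objectives: Max-Egal — $O(G)$ is the set of $P\in\Pi_k$ maximizing $\min_{a}u(a,P)$; At-least-1 — $O(G)$ is the set of $P\in\Pi_k$ in which every agent has utility $\ge1$, and if none exists $O(G)=\emptyset$ and all utilities (hence min and max over $O(G)$) are taken as $0$. Manipulator types: $m^-$ removes edges (in directed networks only outgoing edges $(m,a)\in E$); $m^+$ adds edges (in undirected networks any new edge $\{m,a\}$). The manipulator's utility $u(m,P)$ is computed with respect to his true neighbours. Limited information: let $A_0=\{m\}$ and $E_1\subseteq E$ the set of edges with an endpoint in $A_0$; $G_1=(A,E_1)$ is the partial network known to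 $m$ (distance 1); $m$ knows all agents of $A$. A possible network of $G_1$ is $\overline{G_1}=(A,E_1\cup E')$ where no edge of $E'$ has an endpoint in $A_0$. $\overline{G_1}^m$ denotes the result of applying the manipulation $r_m$ (the same added/removed edges at $m$) to $\overline{G_1}$, and $u(m,P)$ there is computed with $m$'s true neighbours. *)

(* Defs.v *)
From mathcomp Require Import all_boot.
Set Implicit Arguments. Unset Strict Implicit. Unset Printing Implicit Defensive.

Section Coalitions.
Variable n : nat.
Notation A := 'I_n.
Notation net := {set A * A}.

Definition directed_net (E : net) : bool := [forall a : A, (a, a) \notin E].

(* Undirected network: symmetric edge set (each edge {a,b} stored as both
   (a,b) and (b,a)) without self-loops. *)
Definition undirected_net (E : net) : bool :=
  directed_net E && [forall a : A, forall b : A, ((a, b) \in E) ==> ((b, a) \in E)].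

Definition nbrs (E : net) (a : A) : {set A} := [set b | (a, b) \in E].

Definition uC (E : net) (a : A) (C : {set A}) : nat := #|C :&: nbrs E a|.

Definition uP (E : net) (P : {set {set A}}) (a : A) : nat := uC E a (pblock P a).

Definition Pi (k : nat) : {set {set {set A}}} :=
  [set P : {set {set A}} | partition P [set: A] && (#|P| == k)].

(* min_a u(a,P)  (the default value n is irrelevant since A is nonempty
   whenever 0 < k <= n) *)
Definition minU (E : net) (P : {set {set A}}) : nat :=
  \big[minn/n]_(a : A) uP E P a.

Definition O_egal (k : nat) (E : net) : {set {set {set A}}} :=
  [set P in Pi k | [forall Q in Pi k, minU E Q <= minU E P]].

Definition O_atleast1 (k : nat) (E : net) : {set {set {set A}}} :=
  [set P in Pi k | [forall a : A, 0 < uP E P a]].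

(* max_{P in O} u(m,P) w.r.t. the true network Etrue; 0 if O is empty *)
Definition maxU (Etrue : net) (O : {set {set {set A}}}) (m : A) : nat :=
  \max_(P in O) uP Etrue P m.

Definition E1 (E : net) (m : A) : net := [set e in E | (e.1 == m) || (e.2 == m)].

Definition possible (valid : net -> bool) (E : net) (m : A) (Eb : net) : Prop :=
  valid Eb /\
  exists E' : net, (forall e, e \in E' -> e.1 != m /\ e.2 != m) /\ Eb = E1 E m :|: E'.

Definition safe1_UB_improvement (valid : net -> bool)
    (O : nat -> net -> {set {set {set A}}}) (manip : net -> net)
    (k : nat) (E : net) (m : A) : Prop :=
  (forall Eb, possible valid E m Eb -> maxU E (O k Eb) m <= maxU E (O k (manip Eb)) m)
  /\ (exists Eb, possible valid E m Eb /\ maxU E (O k Eb) m < maxU E (O k (manip Eb)) m).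

Definition add_edges (m : A) (S : {set A}) : net :=
  [set e | ((e.1 == m) && (e.2 \in S)) || ((e.2 == m) && (e.1 \in S))].

End Coalitions.

(* Main.v *)
Require Import Defs.
From mathcomp Require Import all_boot.
Set Implicit Arguments. Unset Strict Implicit. Unset Printing Implicit Defensive.

Lemma maxU_sub n (E : {set 'I_n * 'I_n}) (O1 O2 : {set {set {set 'I_n}}}) m :
  O1 \subset O2 -> maxU E O1 m <= maxU E O2 m.
Proof. move=> sub; apply/bigmax_leqP => P PO1; apply: leq_bigmax_cond; exact: (subsetP sub). Qed.

Lemma minU_le n (E : {set 'I_n * 'I_n}) P x : minU E P <= uP E P x.
Proof.
rewrite /minU; have : x \in index_enum 'I_n by rewrite mem_index_enum.
elim: (index_enum 'I_n) => // i r IH; rewrite inE big_cons => /orP[/eqP<-|xr].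
  exact: geq_minl.
exact: leq_trans (geq_minr _ _) (IH xr).
Qed.

Lemma minU_ge n (E : {set 'I_n * 'I_n}) P v : v <= n -> (forall x, v <= uP E P x) -> v <= minU E P.
Proof.
move=> hn h; rewrite /minU; elim/big_ind: _ => // x y hx hy; by rewrite leq_min hx hy.
Qed.

Lemma two_part (T : finType) (B1 B2 : {set T}) : [disjoint B1 & B2] -> B1 :|: B2 = setT ->
  B1 != set0 -> B2 != set0 -> partition [set B1; B2] [set: T] /\ #|[set B1; B2]| = 2.
Proof.
move=> dis U n1 n2.
have neq : B1 != B2.
  apply/eqP => e; move: dis n1; rewrite e -setI_eq0 setIid => /eqP ->; by rewrite eqxx.
split; last by rewrite cards2 neq.
have tr : trivIset [set B1; B2].
  apply/trivIsetP => A B; rewrite !inE => /orP[]/eqP-> /orP[]/eqP->; rewrite ?eqxx //.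
  by rewrite disjoint_sym.
rewrite /partition tr /= !inE negb_or !(eq_sym set0) n1 n2 andbT.
by rewrite /cover big_setU1 /= ?inE // big_set1 U eqxx.
Qed.

Definition m4 : 'I_4 := @Ordinal 4 0 isT.
Definition a4 : 'I_4 := @Ordinal 4 1 isT.
Definition b4 : 'I_4 := @Ordinal 4 2 isT.
Definition c4 : 'I_4 := @Ordinal 4 3 isT.
Definition E4 : {set 'I_4 * 'I_4} := [set (m4, a4); (m4, b4); (a4, m4)].
Definition R4 : {set 'I_4 * 'I_4} := [set (m4, a4); (m4, b4)].
Definition Ex : {set 'I_4 * 'I_4} := [set (b4, c4); (c4, b4)].
Definition Eb0 := E4 :|: Ex.
Definition Q0 : {set {set 'I_4}} := [set [set m4; a4]; [set b4; c4]].
Definition Ps : {set {set 'I_4}} := [set [set m4; a4; b4]; [set c4]].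

Ltac o4 x := case: x => [[|[|[|[|?]]]] ?] //.

Lemma enum4 (x : 'I_4) : [\/ x = m4, x = a4, x = b4 | x = c4].
Proof.
case: x => [[|[|[|[|?]]]] ?] //; [constructor 1|constructor 2|constructor 3|constructor 4];
  exact: val_inj.
Qed.

Lemma E4_E1 : E1 E4 m4 = E4.
Proof. apply/setP => -[x y]; rewrite !inE /=; o4 x; o4 y. Qed.

Lemma Q0_part : partition Q0 [set: 'I_4] /\ #|Q0| = 2.
Proof.
apply: two_part.
- rewrite -setI_eq0; apply/eqP/setP => x; rewrite !inE; o4 x.
- apply/setP => x; rewrite !inE; o4 x.
- by apply/eqP => /setP/(_ m4); rewrite !inE.
- by apply/eqP => /setP/(_ b4); rewrite !inE.
Qed.

Lemma Ps_part : partition Ps [set: 'I_4] /\ #|Ps| = 2.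
Proof.
apply: two_part.
- rewrite -setI_eq0; apply/eqP/setP => x; rewrite !inE; o4 x.
- apply/setP => x; rewrite !inE; o4 x.
- by apply/eqP => /setP/(_ m4); rewrite !inE.
- by apply/eqP => /setP/(_ c4); rewrite !inE.
Qed.

Lemma inPi P : partition P [set: 'I_4] /\ #|P| = 2 -> P \in Pi 4 2.
Proof. by case=> p c; rewrite inE p c eqxx. Qed.

Lemma possible_noout Eb : possible (@directed_net 4) E4 m4 Eb -> nbrs (Eb :\: R4) m4 = set0.
Proof.
case=> _ [E' [hE' ->]]; apply/setP => y; rewrite !inE /=.
case: ((m4, y) \in E') / boolP.
  by move=> /hE' [/negP].
by rewrite orbF; o4 y; rewrite !inE.
Qed.

Lemma Opi Eb : possible (@directed_net 4) E4 m4 Eb -> O_egal 2 (Eb :\: R4) = Pi 4 2.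
Proof.
move=> /possible_noout h; apply/setP => P; rewrite inE.
case: (P \in Pi 4 2) => //=; apply/forallP => Q; apply/implyP => _.
have : minU (Eb :\: R4) Q <= uP (Eb :\: R4) Q m4 by apply: minU_le.
by rewrite /uP /uC h setI0 cards0 leqn0 => /eqP ->.
Qed.

Lemma part1 : (exists (n k : nat) (E : {set 'I_n * 'I_n}) (m : 'I_n) (R : {set 'I_n * 'I_n}),
      [/\ 0 < k <= n, directed_net E, R \subset E,
          (forall e, e \in R -> e.1 = m) &
          safe1_UB_improvement (@directed_net n) (@O_egal n)
            (fun Eb => Eb :\: R) k E m]).
Proof.
exists 4, 2, E4, m4, R4; split => //.
- by apply/forallP => x; o4 x; rewrite !inE.
- by apply/subsetP => e; rewrite !inE => /orP[]/eqP->; rewrite eqxx ?orbT.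
- by move=> e; rewrite !inE => /orP[]/eqP->.
split.
  move=> Eb hEb; rewrite (Opi hEb); apply: maxU_sub; apply/subsetP => P.
  by rewrite inE => /andP[].
have pEb0 : possible (@directed_net 4) E4 m4 Eb0.
  split.
    by apply/forallP => x; o4 x; rewrite !inE.
  exists Ex; split; last by rewrite E4_E1.
  by move=> e; rewrite !inE => /orP[]/eqP->.
exists Eb0; split => //.
rewrite (Opi pEb0).
apply: (@leq_trans 2).
  rewrite ltnS; apply/bigmax_leqP => P; rewrite inE => /andP[PPi /forallP /(_ Q0)].
  rewrite (inPi Q0_part) /= => hQ.
  have h1 : 1 <= minU Eb0 P.
    apply: leq_trans hQ; apply: minU_ge => // x.
    have tr : trivIset Q0 by case: Q0_part => /and3P[].
    have pb1 : forall y, y \in [set m4; a4] -> pblock Q0 y = [set m4; a4].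
      by move=> y hy; apply: def_pblock => //; rewrite !inE eqxx.
    have pb2 : forall y, y \in [set b4; c4] -> pblock Q0 y = [set b4; c4].
      by move=> y hy; apply: def_pblock => //; rewrite !inE eqxx ?orbT.
    rewrite /uP /uC; apply/card_gt0P; case: (enum4 x) => ->.
    - by exists a4; rewrite pb1 ?inE.
    - by exists m4; rewrite pb1 ?inE.
    - by exists c4; rewrite pb2 ?inE.
    - by exists b4; rewrite pb2 ?inE.
  move: PPi; rewrite inE => /andP[/and3P[/eqP cov tr n0] /eqP cP].
  rewrite leqNgt; apply/negP => h2.
  set B := pblock P m4.
  have nb : nbrs E4 m4 = [set a4; b4] by apply/setP => x; rewrite !inE; o4 x.
  have inc : forall x, x \in pblock P x by move=> x; rewrite mem_pblock cov inE.
  have sB : [set a4; b4] \subset B.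
    have e : B :&: [set a4; b4] == [set a4; b4].
      by rewrite eqEcard subsetIr cards2 /=; move: h2; rewrite /uP /uC nb.
    by rewrite -(eqP e) subsetIl.
  have aB : a4 \in B by apply: (subsetP sB); rewrite !inE eqxx.
  have bB : b4 \in B by apply: (subsetP sB); rewrite !inE eqxx orbT.
  have hc : 0 < uP Eb0 P c4 := leq_trans h1 (minU_le _ _ _).
  have nc : nbrs Eb0 c4 = [set b4] by apply/setP => x; rewrite !inE; o4 x.
  move: hc; rewrite /uP /uC nc => /card_gt0P [y]; rewrite !inE => /andP[yc /eqP ey].
  move: yc; rewrite ey => bc.
  have pbc : pblock P c4 = B.
    by rewrite -(same_pblock tr bc) (same_pblock tr bB).
  have allB : forall x, x \in B.
    move=> x; case: (enum4 x) => ->; rewrite ?aB ?bB //.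
    by rewrite -pbc; exact: inc.
  have BP : B \in P by apply: pblock_mem; rewrite cov inE.
  have : P \subset [set B].
    apply/subsetP => B' B'P; rewrite inE; have : B' != set0.
      by apply: contraNneq n0 => <-.
    case/set0Pn => x xB'.
    by rewrite -(def_pblock tr B'P xB') (def_pblock tr BP (allB x)).
  by move/subset_leq_card; rewrite cards1 cP.
have tr : trivIset Ps by case: Ps_part => /and3P[].
apply: (leq_trans _ (leq_bigmax_cond _ (inPi Ps_part))).
rewrite /uP /uC.
have -> : pblock Ps m4 = [set m4; a4; b4] by apply: def_pblock; rewrite ?inE ?eqxx.

have -> : [set m4; a4; b4] :&: nbrs E4 m4 = [set a4; b4].
  by apply/setP => x; rewrite !inE; o4 x.
by rewrite cards2.
Qed.

Lemma uP_mono n (E E' : {set 'I_n * 'I_n}) P x : E \subset E' -> uP E P x <= uP E' P x.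
Proof.
move=> s; apply: subset_leq_card; apply: setIS; apply/subsetP => y; rewrite !inE.
exact: (subsetP s).
Qed.

Lemma O1_mono n k (E E' : {set 'I_n * 'I_n}) : E \subset E' ->
  O_atleast1 k E \subset O_atleast1 k E'.
Proof.
move=> s; apply/subsetP => P; rewrite !inE => /andP[-> /forallP h] /=.
apply/forallP => x; exact: leq_trans (h x) (uP_mono P x s).
Qed.

Definition m3 : 'I_3 := @Ordinal 3 0 isT.
Definition a3 : 'I_3 := @Ordinal 3 1 isT.
Definition c3 : 'I_3 := @Ordinal 3 2 isT.
Definition E3 : {set 'I_3 * 'I_3} := [set (m3, a3); (a3, m3)].

Lemma E3_und : undirected_net E3.
Proof.
apply/andP; split; apply/forallP => x; last apply/forallP => y.
  by case: x => [[|[|[|?]]] ?] //; rewrite !inE.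
by case: x => [[|[|[|?]]] ?] //; case: y => [[|[|[|?]]] ?] //; rewrite !inE.
Qed.

Lemma E3_E1 : E1 E3 m3 = E3.
Proof.
apply/setP => -[x y]; rewrite !inE /=.
by case: x => [[|[|[|?]]] ?] //; case: y => [[|[|[|?]]] ?] //.
Qed.

Lemma part2 : (exists (n k : nat) (E : {set 'I_n * 'I_n}) (m : 'I_n) (S : {set 'I_n}),
      [/\ 0 < k <= n, undirected_net E,
          (forall a, a \in S -> a != m /\ (m, a) \notin E) &
          safe1_UB_improvement (@undirected_net n) (@O_atleast1 n)
            (fun Eb => Eb :|: add_edges m S) k E m]).
Proof.
exists 3, 1, E3, m3, [set c3]; split => //.
- exact: E3_und.
- by move=> x; rewrite inE => /eqP ->; rewrite !inE.
split.
  move=> Eb _; apply: maxU_sub; apply: O1_mono; exact: subsetUl.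
exists E3; split.
  split; first exact: E3_und.
  by exists set0; split => [e|]; rewrite ?inE // setU0 E3_E1.
have -> : maxU E3 (O_atleast1 1 E3) m3 = 0.
  apply/eqP; rewrite -leqn0; apply/bigmax_leqP => P; rewrite inE => /andP[_ /forallP /(_ c3)].
  rewrite /uP /uC; have -> : nbrs E3 c3 = set0.
    by apply/setP => y; rewrite !inE; case: y => [[|[|[|?]]] ?].
  by rewrite setI0 cards0.
set P1 : {set {set 'I_3}} := [set setT].
have pb : forall x, pblock P1 x = setT.
  by move=> x; apply: def_pblock; rewrite ?inE ?trivIset1.
have hP1 : P1 \in O_atleast1 1 (E3 :|: add_edges m3 [set c3]).
  rewrite !inE; apply/andP; split.
    rewrite cards1 andbT /partition cover1 trivIset1 eqxx /= inE.
    by apply/eqP => /setP/(_ m3); rewrite !inE.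
  apply/forallP => x; rewrite /uP /uC pb setTI; apply/card_gt0P.
  case: x => [[|[|[|?]]] ?] //.
  - by exists a3; rewrite !inE.
  - by exists m3; rewrite !inE.
  - by exists m3; rewrite !inE.
apply: (leq_trans _ (leq_bigmax_cond _ hP1)).
rewrite /uP /uC pb setTI; apply/card_gt0P; exists a3; by rewrite !inE.
Qed.

Theorem proposition2 :
  (* (i) Max-Egal, manipulator m^- (removes outgoing edges), directed networks *)
  (exists (n k : nat) (E : {set 'I_n * 'I_n}) (m : 'I_n) (R : {set 'I_n * 'I_n}),
      [/\ 0 < k <= n, directed_net E, R \subset E,
          (forall e, e \in R -> e.1 = m) &
          safe1_UB_improvement (@directed_net n) (@O_egal n)
            (fun Eb => Eb :\: R) k E m])
  /\
  (* (ii) At-least-1, manipulator m^+ (adds new edges {m,a}), undirected networks *)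
  (exists (n k : nat) (E : {set 'I_n * 'I_n}) (m : 'I_n) (S : {set 'I_n}),
      [/\ 0 < k <= n, undirected_net E,
          (forall a, a \in S -> a != m /\ (m, a) \notin E) &
          safe1_UB_improvement (@undirected_net n) (@O_atleast1 n)
            (fun Eb => Eb :|: add_edges m S) k E m]).
Proof. split; [exact: part1 | exact: part2]. Qed.
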